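(* Let $M=(m_0,m_1,m_2,\ldots)$ be a (possibly finite) sequence of integers with $m_0=1$ and $m_j\ge 2$ for all $j\ge 1$. Then for all positive integers $n$ and $r$ (with $r$ at most the largest index of $M$ if $M$ is finite) we have $$p_M(m_1m_2\cdots m_r\,n-1)\equiv 0 \pmod{\prod_{t=2}^{r}\mathcal{M}(m_t,t-1)}.$$
   Context: For $r\ge 0$ put $M_r:=m_0m_1\cdots m_r$. An $M$-ary partition of a positive integer $N$ is a representation $N=M_{r_1}+M_{r_2}+\cdots+M_{r_s}$ with nonnegative integers $r_1,\ldots,r_s$, where the order of the summands is disregarded (i.e. a partition of $N$ all of whose parts are of the form $M_r$). $p_M(N)$ denotes the number of $M$-ary partitions of $N$. For positive integers $m,r$ define $\mathcal{M}(m,r):=\dfrac{m}{\gcd\big(m,\operatorname{lcm}(1,2,\ldots,r)\big)}$. An empty product (the case $r=1$) equals $1$. *)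

(* Defs.v *)
From mathcomp Require Import all_boot.
Set Implicit Arguments. Unset Strict Implicit. Unset Printing Implicit Defensive.

(* The sequence M = (m_0, m_1, ...) is given by m : nat -> nat together with
   K : option nat : K = None means M is infinite, K = Some k means M is the
   finite sequence (m_0, ..., m_k) (k = largest index). *)
Definition valid_idx (K : option nat) (r : nat) : bool :=
  if K is Some k then r <= k else true.

Definition Mprod (m : nat -> nat) (r : nat) : nat := \prod_(0 <= j < r.+1) m j.

(* Since m_0 = 1 and
   m_j >= 2, M_r >= 2^r > r, so any such r satisfies r < v.+1; the bound only
   makes the existential a finite (boolean) search. *)
Definition is_Mpart (m : nat -> nat) (K : option nat) (v : nat) : bool :=
  [exists r : 'I_v.+1, valid_idx K r && (Mprod m r == v)].

(* A partition of N is encoded by its multiplicity function c : value -> mult.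
   Every part of a partition of N is <= N and every multiplicity is <= N, so
   c : {ffun 'I_N.+1 -> 'I_N.+1} loses nothing. *)
Definition Mary_partition (m : nat -> nat) (K : option nat) (N : nat)
    (c : {ffun 'I_N.+1 -> 'I_N.+1}) : bool :=
  [forall v : 'I_N.+1, (0 < c v) ==> ((0 < (v : nat)) && is_Mpart m K v)]
  && (\sum_(v : 'I_N.+1) (v : nat) * c v == N).

Definition pM (m : nat -> nat) (K : option nat) (N : nat) : nat :=
  #|[pred c : {ffun 'I_N.+1 -> 'I_N.+1} | Mary_partition m K c]|.

Definition lcm_upto (r : nat) : nat := \big[lcmn/1]_(1 <= i < r.+1) i.

Definition calM (mm r : nat) : nat := mm %/ gcdn mm (lcm_upto r).

(* Main.v *)
Require Import Defs.
From mathcomp Require Import all_boot.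
From mathcomp Require Import all_algebra zify ring.
Import GRing.Theory Num.Theory.
Set Implicit Arguments. Unset Strict Implicit.

Lemma lcm_upto_dvd i k : 0 < i <= k -> i %| lcm_upto k.
Proof.
elim: k => [|k IH]; first by case: i => [|[]].
move=> /andP[i0 ik]; rewrite /lcm_upto big_nat_recr //=.
case: (ltnP i k.+1) => h.
  apply: dvdn_trans (dvdn_lcml _ _); apply: IH; by rewrite i0.
have -> : i = k.+1 by apply/eqP; rewrite eqn_leq ik h.
exact: dvdn_lcmr.
Qed.

Lemma lcm_upto_gt0 k : 0 < lcm_upto k.
Proof.
elim: k => [|k IH]; first by rewrite /lcm_upto big_geq.
by rewrite /lcm_upto big_nat_recr //= lcmn_gt0 IH.
Qed.

Lemma calM_bin c k i : 0 < i <= k -> calM c k %| 'C(c, i).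
Proof.
move=> hi; rewrite /calM.
set L := lcm_upto k; set g := gcdn c L.
have g0 : 0 < g by rewrite gcdn_gt0 lcm_upto_gt0 orbT.
have iL : i %| L by apply: lcm_upto_dvd.
have ci : c %| i * 'C(c, i).
  case: i hi iL => [|i] // _ _; rewrite -mul_bin_diag; exact: dvdn_mulr.
have cL : c %| L * 'C(c, i) by apply: dvdn_trans ci _; apply: dvdn_mul.
have cg : c %| g * 'C(c, i).
  rewrite /g muln_gcdl dvdn_gcd cL andbT; exact: dvdn_mulr.
have gc : g %| c by apply: dvdn_gcdl.
rewrite -(dvdn_pmul2l g0).
by rewrite [g * (c %/ g)]mulnC divnK.
Qed.

Local Open Scope ring_scope.

Definition Dl (f : nat -> int) : nat -> int := fun x => f x.+1 - f x.

Fixpoint polyd (d : nat) (f : nat -> int) : Prop :=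
  if d is d'.+1 then polyd d' (Dl f) else forall x, f x.+1 = f x.

Lemma polyd_ext d f g : f =1 g -> polyd d f -> polyd d g.
Proof.
elim: d f g => [|d IH] f g fg /=; first by move=> h x; rewrite -!fg.
apply: IH => x; by rewrite /Dl !fg.
Qed.

Lemma polyd_const d (c : int) : polyd d (fun _ => c).
Proof.
elim: d c => [|d IH] c //=.
apply: (@polyd_ext _ (fun _ => 0)); last exact: IH.
by move=> x; rewrite /Dl subrr.
Qed.

Lemma polyd_add d f g : polyd d f -> polyd d g -> polyd d (fun x => f x + g x).
Proof.
elim: d f g => [|d IH] f g /=; first by move=> hf hg x; rewrite hf hg.
move=> hf hg; apply: (@polyd_ext _ (fun x => Dl f x + Dl g x)); last exact: IH.
by move=> x; rewrite /Dl; ring.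
Qed.

Lemma polyd_sum d n (F : nat -> nat -> int) :
  (forall i, polyd d (F i)) -> polyd d (fun x => \sum_(i < n) F i x).
Proof.
move=> hF; elim: n => [|n IH].
  apply: (@polyd_ext _ (fun _ => 0)); last exact: polyd_const.
  by move=> x; rewrite big_ord0.
apply: (@polyd_ext _ (fun x => \sum_(i < n) F i x + F n x)).
  by move=> x; rewrite big_ord_recr.
exact: polyd_add.
Qed.

Lemma polyd0_const f : polyd 0 f -> forall x, f x = f 0%N.
Proof. by move=> h; elim=> [|x IH] //; rewrite h. Qed.

Lemma telesc (f : nat -> int) a k : f (a + k)%N - f a = \sum_(i < k) Dl f (a + i)%N.
Proof.
elim: k => [|k IH]; first by rewrite big_ord0 addn0 subrr.
rewrite big_ord_recr /= -IH /Dl addnS; ring.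
Qed.

Lemma polyd_comp d f : polyd d f -> forall (c s : nat), polyd d (fun y => f (c * y + s)%N).
Proof.
elim: d f => [|d IH] f /= hf c s.
  by move=> x; rewrite (polyd0_const hf (c * x.+1 + s)%N) (polyd0_const hf (c * x + s)%N).
apply: (@polyd_ext _ (fun y => \sum_(i < c) Dl f (c * y + s + i)%N)).
  move=> y; rewrite /Dl -telesc; congr (f _ - _); rewrite mulnS; lia.
apply: (@polyd_sum d c (fun i y => Dl f (c * y + s + i)%N)) => i.
apply: (@polyd_ext _ (fun y => Dl f (c * y + (s + i))%N)); last exact: IH.
by move=> y; rewrite addnA.
Qed.

Lemma polyd_psum d f : polyd d f -> polyd d.+1 (fun y => \sum_(u < y) f u).
Proof.
move=> h /=; apply: (polyd_ext (f := f)) => // y.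
by rewrite /Dl big_ord_recr /= addrAC subrr add0r.
Qed.

Lemma polyd_divl d f g (C : int) : C != 0 -> (forall x, f x = C * g x) ->
  polyd d f -> polyd d g.
Proof.
elim: d f g => [|d IH] f g hC fg /= hf.
  by move=> x; apply: (mulfI hC); rewrite -!fg hf.
by apply: (IH (Dl f)) => // x; rewrite /Dl !fg mulrBr.
Qed.

Lemma hockey x k : (\sum_(i < x) 'C(i, k) = 'C(x, k.+1))%N.
Proof.
elim: x => [|x IH]; first by rewrite big_ord0 bin0n.
by rewrite big_ord_recr /= IH binS addnC.
Qed.

Lemma newton d f : polyd d f -> forall a x,
  f (a + x)%N = \sum_(k < d.+1) iter k Dl f a * ('C(x, k))%:R.
Proof.
elim: d f => [|d IH] f hf a x.
  rewrite big_ord1 /= (polyd0_const hf (a + x)%N) (polyd0_const hf a).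
  by have h := bin0 x; rewrite h mulr1.
rewrite -[f (a + x)%N](subrK (f a)) telesc.
under eq_bigr => i _ do rewrite (IH _ hf a i).
rewrite exchange_big /=.
under eq_bigr => k _ do rewrite -mulr_sumr -natr_sum hockey.
rewrite [RHS]big_ord_recl addrC; congr (_ + _).
  by have h := bin0 x; rewrite /= h mulr1.
by apply: eq_bigr => k _; rewrite /= add0n -iterSr iterS.
Qed.

Lemma block d f (c a : nat) : polyd d f ->
  ((calM c d.+1)%:R %| \sum_(s < c) f (a + s)%N)%Z.
Proof.
move=> hf.
under eq_bigr => s _ do rewrite (newton hf a s).
rewrite exchange_big /=.
apply: rpred_sum => k _.
rewrite -mulr_sumr -natr_sum hockey.
apply: dvdz_mull.
rewrite dvdzE !natz /=.
apply: calM_bin; by rewrite ltn_ord andbT.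
Qed.

Fixpoint G (m : nat -> nat) (s y : nat) {struct s} : nat :=
  if s is s'.+1 then (\sum_(u < m s.+1 * y) G m s' u.+1)%N else 1%N.

Definition Dp (m : nat -> nat) s := (\prod_(2 <= t < s.+2) calM (m t) t.-1)%N.

Lemma reblock (F : nat -> int) c y :
  \sum_(u < c * y) F u = \sum_(q < y) \sum_(i < c) F (c * q + i)%N.
Proof.
elim: y => [|y IH]; first by rewrite muln0 !big_ord0.
rewrite mulnSr big_split_ord IH big_ord_recr /=; congr (_ + _).
Qed.

Lemma G_poly m s : (forall t, (2 <= t <= s.+1)%N -> (0 < calM (m t) t.-1)%N) ->
  exists H, polyd s H /\ forall y, (G m s y)%:R = (Dp m s)%:R * H y :> int.
Proof.
elim: s => [|s IH] hpos.
  exists (fun _ => 1); split; first exact: polyd_const.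
  by move=> y; rewrite /Dp big_geq // mulr1.
have [H [pH eH]] : exists H, polyd s H /\ forall y, (G m s y)%:R = (Dp m s)%:R * H y :> int.
  apply: IH => t /andP[t2 ts]; apply: hpos; rewrite t2 /=; exact: leqW.
set c := m s.+2; set C := calM c s.+1.
have C0 : (0 < C)%N by apply: (hpos s.+2); rewrite /= ltnSn.
pose V q := \sum_(i < c) H (c * q + 1 + i)%N.
have dV : forall q, ((C%:R : int) %| V q)%Z by move=> q; apply: block.
pose W q := (V q %/ C%:R)%Z.
have eV : forall q, V q = C%:R * W q by move=> q; rewrite mulrC divzK.
have pV : polyd s V.
  apply: (@polyd_sum s c (fun i q => H (c * q + 1 + i)%N)) => i.
  apply: (@polyd_ext _ (fun q => H (c * q + (1 + i))%N)); last exact: polyd_comp.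
  by move=> q; rewrite addnA.
have pW : polyd s W.
  apply: (polyd_divl (C := C%:R)) eV pV.
  by rewrite pnatr_eq0 -lt0n.
exists (fun y => \sum_(q < y) W q); split; first exact: polyd_psum.
move=> y /=.
rewrite natr_sum.
under eq_bigr => u _ do rewrite eH.
rewrite -mulr_sumr (reblock (fun u => H u.+1)).
rewrite -/c.
have E : forall q : 'I_y, \sum_(i < c) H (c * q + i).+1 = C%:R * W q.
  by move=> q; rewrite -eV /V; apply: eq_bigr => i _; congr H; lia.
rewrite (eq_bigr _ (fun q _ => E q)).
rewrite -mulr_sumr mulrA -natrM; congr (_%:R * _).
by rewrite /Dp [RHS]big_nat_recr.
Qed.

Lemma G_dvd m s y : (forall t, (2 <= t <= s.+1)%N -> (0 < calM (m t) t.-1)%N) ->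
  (Dp m s %| G m s y)%N.
Proof.
move=> h; have [H [_ eH]] := G_poly h.
have : (((Dp m s)%:R : int) %| (G m s y)%:R)%Z by rewrite eH dvdz_mulr.
by rewrite dvdzE !natz.
Qed.

Local Close Scope ring_scope.

Section Comb.
Variable N : nat.

Definition wt (c : {ffun 'I_N.+1 -> 'I_N.+1}) : nat := \sum_(v : 'I_N.+1) (v : nat) * c v.

Definition cnt (P : pred nat) (X : nat) : nat :=
  #|[pred c : {ffun 'I_N.+1 -> 'I_N.+1} |
     [forall v : 'I_N.+1, (0 < c v) ==> P v] && (wt c == X)]|.

Lemma cnt_ext (P Q : pred nat) (X : nat) : (forall v : 'I_N.+1, P v = Q v) -> cnt P X = cnt Q X.
Proof.
move=> PQ; apply: eq_card => c; rewrite !inE.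
congr andb; apply: eq_forallb => v; by rewrite PQ.
Qed.

Lemma cnt0 X : cnt pred0 X = (X == 0).
Proof.
pose c0 : {ffun 'I_N.+1 -> 'I_N.+1} := [ffun _ => ord0].
have E : forall c : {ffun 'I_N.+1 -> 'I_N.+1},
   ([forall v : 'I_N.+1, (0 < c v) ==> pred0 v] && (wt c == X)) = (c == c0) && (X == 0).
  move=> c; apply/andP/andP => [[/forallP h /eqP <-]|[/eqP -> /eqP ->]].
    have cE : c = c0.
      apply/ffunP => v; rewrite ffunE; apply/val_inj => /=.
      by move: (h v); case: (c v) => [[|k] ?].
    by rewrite cE eqxx; split=> //; rewrite /wt big1 // => v _; rewrite ffunE muln0.
  split; first by apply/forallP => v; rewrite ffunE.
  by rewrite /wt big1 // => v _; rewrite ffunE muln0.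
rewrite /cnt (eq_card (B := [pred c | (c == c0) && (X == 0)])); last first.
  by move=> c; rewrite !inE E.
case: eqP => _ /=.
  by rewrite (eq_card (B := pred1 c0)) ?card1 // => c; rewrite !inE ?andbT.
by rewrite (eq_card (B := pred0)) ?card0 // => c; rewrite !inE ?andbF.
Qed.

Lemma wtE (p : 'I_N.+1) c : wt c = p * c p + \sum_(v | v != p) v * c v.
Proof. by rewrite /wt (bigD1 p). Qed.

Lemma cnt_split (P : pred nat) (p : 'I_N.+1) (X : nat) : P p ->
  cnt P X = \sum_(0 <= a < N.+1 | a * p <= X) cnt (fun v => P v && (v != p)) (X - a * p).
Proof.
move=> Pp.
set A := [pred c : {ffun 'I_N.+1 -> 'I_N.+1} |
     [forall v : 'I_N.+1, (0 < c v) ==> P v] && (wt c == X)].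
have -> : cnt P X = \sum_(a < N.+1) #|[pred c | (c \in A) && (c p == a)]|.
  rewrite /cnt -/A -sum1_card (partition_big (fun c : {ffun 'I_N.+1 -> 'I_N.+1} => c p) (fun _ : 'I_N.+1 => true)) //=.
  by apply: eq_bigr => a _; rewrite -sum1_card.
rewrite big_mkord [RHS]big_mkcond /=; apply: eq_bigr => a _.
case: leqP => ha; last first.
  apply: eq_card0 => c; rewrite !inE; apply/negP => /andP[/andP[_ /eqP wc] /eqP cp].
  move: ha; rewrite -wc (wtE p) cp mulnC; move=> h.
  by move: (leq_ltn_trans (leq_addr _ _) h); rewrite ltnn.
set P' := fun v => P v && (v != p).
set A' := [pred c : {ffun 'I_N.+1 -> 'I_N.+1} |
     [forall v : 'I_N.+1, (0 < c v) ==> P' v] && (wt c == X - a * p)].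
pose f (c : {ffun 'I_N.+1 -> 'I_N.+1}) : {ffun 'I_N.+1 -> 'I_N.+1} :=
  [ffun v => if v == p then a else c v].
pose g (c : {ffun 'I_N.+1 -> 'I_N.+1}) : {ffun 'I_N.+1 -> 'I_N.+1} :=
  [ffun v => if v == p then ord0 else c v].
have restf : forall c, \sum_(v | v != p) v * f c v = \sum_(v | v != p) v * c v.
  by move=> c; apply: eq_bigr => v /negbTE vp; rewrite ffunE vp.
have restg : forall c, \sum_(v | v != p) v * g c v = \sum_(v | v != p) v * c v.
  by move=> c; apply: eq_bigr => v /negbTE vp; rewrite ffunE vp.
have A'p : forall c, c \in A' -> c p = ord0.
  move=> c; rewrite inE => /andP[/forallP /(_ p)]; rewrite /P' eqxx andbF.
  by case: (c p) => [[|k] ?] //= _ _; apply: val_inj.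
have injf : {in A' &, injective f}.
  move=> c1 c2 h1 h2 e; apply/ffunP => v.
  case: (eqVneq v p) => [->|vp]; first by rewrite (A'p _ h1) (A'p _ h2).
  by move/ffunP: e => /(_ v); rewrite !ffunE (negbTE vp).
rewrite /cnt -/P' -/A' -(card_in_imset injf).
apply: eq_card => c; rewrite inE; apply/andP/imsetP.
  move=> [hA /eqP cp]; exists (g c).
    move: hA; rewrite !inE => /andP[/forallP hP /eqP wc]; apply/andP; split.
      apply/forallP => v; rewrite ffunE; case: (eqVneq v p) => // vp.
      by rewrite /P' vp andbT; exact: hP.
    by rewrite (wtE p) ffunE eqxx muln0 add0n restg -wc (wtE p) cp mulnC addKn.
  by apply/ffunP => v; rewrite !ffunE; case: (eqVneq v p) => [->|]; rewrite ?cp ?eqxx.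
move=> [c' hc' ->]; split; last by rewrite ffunE eqxx.
move: (hc'); rewrite !inE => /andP[/forallP hP /eqP wc]; apply/andP; split.
  apply/forallP => v; rewrite ffunE; case: (eqVneq v p) => [->|vp]; first by rewrite Pp implybT.
  by move: (hP v); rewrite /P' vp andbT.
rewrite (wtE p) ffunE eqxx restf.
have := wtE p c'; rewrite (A'p _ hc') muln0 add0n => <-.
by rewrite wc mulnC subnKC.
Qed.

End Comb.

Lemma sum_eq1 X k : \sum_(0 <= a < k | a <= X) (X - a == 0) = (X < k).
Proof.
rewrite big_mkcond /=; elim: k => [|k IH]; first by rewrite big_geq.
rewrite big_nat_recr //= IH.
case: (ltngtP X k) => h.
- by rewrite ltnS ltnW.
- rewrite ltnS leqNgt h /= (_ : (X - k == 0) = false) //.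
  by apply/negbTE; rewrite subn_eq0 -ltnNge.
- by rewrite h subnn ltnSn.
Qed.

Section Main.
Variables (m : nat -> nat) (K : option nat).
Hypothesis hm0 : m 0 = 1.
Hypothesis hm : forall j, 1 <= j -> valid_idx K j -> 2 <= m j.
Variables (n r : nat).
Hypotheses (hn : 0 < n) (hr : 0 < r) (hrK : valid_idx K r).

Lemma valid_le i : i <= r -> valid_idx K i.
Proof. by move: hrK; case: K => //= k h1 h2; exact: leq_trans h2 h1. Qed.

Lemma MpS t : Mprod m t.+1 = Mprod m t * m t.+1.
Proof. by rewrite /Mprod big_nat_recr. Qed.

Lemma Mp0 : Mprod m 0 = 1.
Proof. by rewrite /Mprod big_nat1; exact: hm0. Qed.

Lemma Mp_gt i : i <= r -> i < Mprod m i.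
Proof.
elim: i => [|i IH] h; first by rewrite Mp0.
rewrite MpS; have := @hm i.+1 erefl (valid_le h); have := IH (ltnW h); nia.
Qed.

Lemma Mp_step t : t < r -> Mprod m t < Mprod m t.+1.
Proof.
move=> ht; rewrite MpS; have := @hm t.+1 erefl (valid_le ht).
have := Mp_gt (ltnW ht); nia.
Qed.

Lemma Mp_lt i j : i < j -> j <= r -> Mprod m i < Mprod m j.
Proof.
elim: j => // j IH; rewrite ltnS leq_eqVlt => /orP[/eqP->|hij] hj; first exact: Mp_step.
apply: ltn_trans (IH hij (ltnW hj)) (Mp_step hj).
Qed.

Lemma Mp_dvd i j : i <= j -> Mprod m i %| Mprod m j.
Proof.
elim: j => [|j IH]; first by rewrite leqn0 => /eqP->.
rewrite leq_eqVlt ltnS => /orP[/eqP->//|/IH h]; rewrite MpS; exact: dvdn_mulr.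
Qed.

Lemma prodE : \prod_(1 <= j < r.+1) m j = Mprod m r.
Proof. by rewrite /Mprod [RHS]big_ltn // hm0 mul1n. Qed.

Definition Sm t (v : nat) := has (fun i => v == Mprod m i) (iota 0 t).

Lemma S_S t v : Sm t.+1 v = Sm t v || (v == Mprod m t).
Proof. by rewrite /Sm -addn1 iotaD has_cat /= orbF. Qed.

Lemma SP t v : reflect (exists2 i, i < t & v = Mprod m i) (Sm t v).
Proof.
apply: (iffP hasP) => [[i]|[i hi ->]]; rewrite ?mem_iota /=.
  by move=> hi /eqP ->; exists i.
by exists i; rewrite ?mem_iota.
Qed.

Definition NN := Mprod m r * n - 1.

Lemma NNS : NN.+1 = Mprod m r * n.
Proof. have := Mp_gt (leqnn r); rewrite /NN; nia. Qed.

Lemma MpN t : t < r -> Mprod m t < NN.+1.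
Proof.
move=> ht; rewrite NNS; apply: leq_trans (Mp_lt ht (leqnn r)) _.
by rewrite leq_pmulr.
Qed.

Lemma cnt_S1 X : cnt NN (Sm 1) X = (X < NN.+1).
Proof.
pose p1 : 'I_NN.+1 := Ordinal (MpN hr).
rewrite (@cnt_split _ _ p1); last by rewrite S_S /= eqxx.
rewrite /= Mp0.
have E : forall Y, cnt NN (fun v => Sm 1 v && (v != 1)) Y = (Y == 0).
  move=> Y; rewrite (@cnt_ext _ _ pred0) ?cnt0 // => v.
  by rewrite S_S /= Mp0; case: eqP.
under eq_bigr => a _ do rewrite E muln1.
under eq_bigl => a do rewrite muln1.
exact: sum_eq1.
Qed.

Lemma cnt_S_G s y : s < r -> 0 < y -> Mprod m s.+1 * y <= NN.+1 ->
  cnt NN (Sm s.+1) (Mprod m s.+1 * y - 1) = G m s y.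
Proof.
elim: s y => [|s IH] y hs hy hb.
  have h : Mprod m 1 * y - 1 < NN.+1 by move: hb; lia.
  by rewrite cnt_S1 h.
set P := Mprod m s.+1.
have P0 : 0 < P by have := Mp_gt (ltnW hs); rewrite /P; lia.
set Y := m s.+2 * y.
have eP : Mprod m s.+2 * y = P * Y by rewrite MpS -mulnA.
have hY : 0 < Y by have := @hm s.+2 erefl (valid_le hs); rewrite /Y; nia.
pose p : 'I_NN.+1 := Ordinal (MpN hs).
rewrite eP (@cnt_split _ _ p); last by rewrite S_S eqxx orbT.
have E : forall a, cnt NN (fun v => Sm s.+2 v && (v != p)) a = cnt NN (Sm s.+1) a.
  move=> a; apply: cnt_ext => v; rewrite S_S /=.
  case: (boolP (Sm s.+1 v)) => hv /=.
    apply/negP => /eqP ev; move: hv => /SP [i hi ev'].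
    by have := Mp_lt hi (ltnW hs); rewrite -ev' ev ltnn.
  by case: eqP.
under eq_bigr => a _ do rewrite E.
rewrite /= -/P.
have bY : P * Y <= NN.+1 by rewrite -eP.
rewrite (eq_bigl (fun a => a < Y)); last first.
  by move=> a; apply/idP/idP => h; nia.
have -> : \sum_(0 <= a < NN.+1 | a < Y) cnt NN (Sm s.+1) (P * Y - 1 - a * P) =
          \sum_(0 <= a < Y) cnt NN (Sm s.+1) (P * Y - 1 - a * P).
  rewrite [RHS](big_nat_widen 0 Y NN.+1) //; last by nia.
rewrite (@eq_big_nat _ _ _ 0 Y _ (fun a => G m s (Y - a))); last first.
  move=> a /andP[_ ha].
  rewrite (_ : P * Y - 1 - a * P = Mprod m s.+1 * (Y - a) - 1); last first.
    rewrite -/P mulnBr; nia.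
  apply: IH; [exact: ltnW | by rewrite subn_gt0 | ].
  apply: leq_trans bY; rewrite -/P leq_pmul2l //; exact: leq_subr.
rewrite big_nat_rev /= add0n -/Y -(big_mkord xpredT (fun u => G m s u.+1)).
apply: eq_big_nat => a /andP[_ ha]; congr (G m s _).
lia.
Qed.

Lemma calM_pos t : 2 <= t <= r -> 0 < calM (m t) t.-1.
Proof.
move=> /andP[t2 tr].
have mt : 1 < m t by apply: hm; [exact: ltnW | exact: valid_le].
rewrite /calM divn_gt0 ?gcdn_gt0 ?(ltnW mt) //.
apply: dvdn_leq; [exact: ltnW | exact: dvdn_gcdl].
Qed.

Lemma base y : 0 < y -> Mprod m r * y <= NN.+1 ->
  Dp m r.-1 %| cnt NN (Sm r) (Mprod m r * y - 1).
Proof.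
move=> hy hb.
have h1 : r.-1 < r by rewrite (prednK hr).
have := @cnt_S_G r.-1 y h1 hy; rewrite (prednK hr) => h.
rewrite h //.
apply: G_dvd => t; rewrite (prednK hr); exact: calM_pos.
Qed.

Lemma tail k : forall (P : pred nat) y,
  #|[pred v : 'I_NN.+1 | P v && ~~ Sm r v]| <= k ->
  (forall v : 'I_NN.+1, Sm r v -> P v) ->
  (forall v : 'I_NN.+1, P v -> ~~ Sm r v -> (0 < v) && (Mprod m r %| v)) ->
  0 < y -> Mprod m r * y <= NN.+1 ->
  Dp m r.-1 %| cnt NN P (Mprod m r * y - 1).
Proof.
have nonecase : forall (P : pred nat) y,
    (forall v : 'I_NN.+1, P v && ~~ Sm r v = false) ->
    (forall v : 'I_NN.+1, Sm r v -> P v) ->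
    0 < y -> Mprod m r * y <= NN.+1 ->
    Dp m r.-1 %| cnt NN P (Mprod m r * y - 1).
  move=> P y none hS hy hb; rewrite (@cnt_ext _ _ (Sm r)); first exact: base.
  move=> v; case: (boolP (Sm r v)) => hv; first by rewrite hS.
  by move: (none v); rewrite hv andbT => ->.
elim: k => [|k IH] P y hk hS hT hy hb;
  case: (pickP [pred v : 'I_NN.+1 | P v && ~~ Sm r v]) => [p /andP[Pp Sp] | none].
- by move: hk; rewrite (cardD1 p) inE Pp Sp.
- by apply: nonecase => // v; move: (none v); rewrite inE.
- rewrite (@cnt_split _ _ p) //; apply: dvdn_sum => a ha.
  have /andP[p0 /dvdnP[b eb]] := hT p Pp Sp.
  set Q := Mprod m r in ha eb hb *.
  have Q0 : 0 < Q by have := Mp_gt (leqnn r); rewrite /Q; lia.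
  have hab : a * b < y by move: ha; rewrite eb; nia.
  rewrite (_ : Q * y - 1 - a * p = Q * (y - a * b) - 1); last first.
    by rewrite eb mulnBr; nia.
  apply: IH.
  + move: hk; rewrite (cardD1 p) inE Pp Sp add1n ltnS => hk.
    apply: leq_trans hk; rewrite leq_eqVlt; apply/orP; left; apply/eqP.
    apply: eq_card => v; rewrite !inE.
    by case: (P v); case: (v != p :> nat); case: (Sm r v).
  + move=> v hv; rewrite hS //=; apply/eqP => e; move: Sp; rewrite -e.
    by rewrite hv.
  + by move=> v /andP[Pv _]; apply: hT.
  + by rewrite subn_gt0.
  + apply: leq_trans hb; rewrite leq_pmul2l //; exact: leq_subr.
- by apply: nonecase => // v; move: (none v); rewrite inE.
Qed.

Definition Pset v := (0 < v) && is_Mpart m K v.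

Lemma mainS : Dp m r.-1 %| pM m K (Mprod m r * n - 1).
Proof.
have -> : pM m K (Mprod m r * n - 1) = cnt NN Pset (Mprod m r * n - 1) by [].
apply: (@tail #|[pred v : 'I_NN.+1 | Pset v && ~~ Sm r v]|) => //.
- move=> v /SP [i hi ev]; rewrite /Pset.
  have iv : i < v by rewrite ev; apply: Mp_gt; exact: ltnW.
  apply/andP; split; first by apply: leq_ltn_trans iv.
  apply/existsP; exists (Ordinal (leqW iv)); rewrite /= valid_le ?ev ?eqxx //.
  exact: ltnW.
- move=> v /andP[v0 /existsP [i /andP[vi /eqP ev]]] hv; rewrite v0 /=.
  case: (ltnP i r) => hir.
    by move/negP: hv => hv; exfalso; apply: hv; apply/SP; exists i.
  by rewrite -ev; apply: Mp_dvd.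
- by rewrite NNS.
Qed.

End Main.

Theorem theorem1p3 (m : nat -> nat) (K : option nat)
  (hm0 : m 0 = 1)
  (hm : forall j, 1 <= j -> valid_idx K j -> 2 <= m j)
  (n r : nat) (hn : 0 < n) (hr : 0 < r) (hrK : valid_idx K r) :
  (\prod_(2 <= t < r.+1) calM (m t) t.-1)
    %| pM m K ((\prod_(1 <= j < r.+1) m j) * n - 1).
Proof.
rewrite (prodE hm0).
have := mainS hm0 hm hn hr hrK.
by rewrite /Dp (prednK hr).
Qed.
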